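(* Let $X$ and $Y$ be Hausdorff compact spaces, $\pi: X \to Y$ a fully closed continuous surjection, $y \in Y$, and $f$ a real-valued continuous function on $\pi^{-1}(y)$. Then there exists a continuous function $\tilde f: X \to \mathbb{R}$ extending $f$ such that the oscillation of $\tilde f$ on $\pi^{-1}(y')$ is $0$ (i.e. $\tilde f$ is constant on $\pi^{-1}(y')$) for every $y' \in Y$ with $y' \neq y$.
   Context: A continuous surjection $\pi: X \to Y$ between Hausdorff compacta is fully closed if for any two closed disjoint subsets $F_1, F_2 \subset X$ the set $\pi(F_1)\cap\pi(F_2)$ is finite. *)

(* Defs.v *)
From HB Require Import structures.
From mathcomp Require Import all_boot all_order all_algebra.
From mathcomp Require Import all_classical all_reals all_analysis.
Set Implicit Arguments. Unset Strict Implicit. Unset Printing Implicit Defensive.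
Import Order.TTheory GRing.Theory Num.Theory.
Local Open Scope classical_set_scope.

Definition fully_closed (X Y : topologicalType) (pi : X -> Y) : Prop :=
  forall F1 F2 : set X, closed F1 -> closed F2 -> F1 `&` F2 = set0 ->
    finite_set (pi @` F1 `&` pi @` F2).

(* Main.v *)
Require Import Defs.
From HB Require Import structures.
From mathcomp Require Import all_boot all_order all_algebra.
From mathcomp Require Import all_classical all_reals all_analysis.
From mathcomp Require Import lra ring.
Import Order.TTheory GRing.Theory Num.Theory.
Import numFieldNormedType.Exports.
Local Open Scope classical_set_scope.
Local Open Scope ring_scope.

Lemma urys (R : realType) (T : topologicalType) (nT : normal_space T) (A B : set T) :
  closed A -> closed B -> A `&` B = set0 ->
  exists u : T -> R, continuous u /\ (forall x, 0 <= u x <= 1) /\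
    (forall x, A x -> u x = 0) /\ (forall x, B x -> u x = 1).
Proof.
move=> cA cB AB.
have := (@normal_separatorP R T).1 nT A B cA cB AB.
move/(@uniform_separatorP T R) => [u [cu r0 uA uB]].
exists u; split => //; split.
  move=> x; have /r0 : range u (u x) by exists x.
  by rewrite /= in_itv.
by split => x Ax; [apply: uA; exists x|apply: uB; exists x].
Qed.

Lemma tstep (R : realType) (T : topologicalType) (nT : normal_space T) (F : set T)
  (h : T -> R) (m : R) : 0 < m -> (forall x, F x -> `|h x| <= 3 * m) ->
  closed (F `&` [set x | h x <= - m]) -> closed (F `&` [set x | m <= h x]) ->
  exists u : T -> R, continuous u /\ (forall x, `|u x| <= m) /\
    (forall x, F x -> `|h x - u x| <= 2 * m).
Proof.
move=> m0 hb cA cB.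
have AB : (F `&` [set x | h x <= - m]) `&` (F `&` [set x | m <= h x]) = set0.
  apply/seteqP; split => // x [[_ /= h1] [_ /= h2]]; lra.
have [v [cv [v01 [vA vB]]]] := @urys R T nT _ _ cA cB AB.
exists (fun x => m * (2 * v x - 1)); split.
  move=> x; apply: cvgM; first exact: cvg_cst.
  apply: cvgB; last exact: cvg_cst.
  by apply: cvgM; [exact: cvg_cst|exact: cv].
split.
  move=> x; have := v01 x => /andP[a b].
  rewrite normrM (gtr0_norm m0) ler_piMr ?(ltW m0) // ler_norml; apply/andP; split; lra.
move=> x Fx; have := hb x Fx; rewrite ler_norml => /andP[h1 h2].
have := v01 x => /andP[a b].
have [hA|hA] := lerP (h x) (- m).
  rewrite vA; last by split.
  by rewrite ler_norml; apply/andP; split; lra.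
have [hB|hB] := lerP m (h x).
  rewrite vB; last by split.
  by rewrite ler_norml; apply/andP; split; lra.
rewrite ler_norml; apply/andP; split; nra.
Qed.

Definition pickf {T : Type} {R : realType} (P : (T -> R) -> Prop) : T -> R :=
  match pselect (exists u, P u) with
  | left e => projT1 (cid e)
  | right _ => fun _ => 0
  end.

Lemma pickfP {T : Type} {R : realType} {P : (T -> R) -> Prop} :
  (exists u, P u) -> P (pickf P).
Proof. by rewrite /pickf; case: pselect => // e _; case: cid. Qed.

Lemma geo_small (R : realType) (e : R) : 0 < e -> exists n : nat, (2/3 : R) ^+ n < e.
Proof.
move=> e0.
have bern : forall n : nat, (2/3 : R) ^+ n * (1 + n%:R / 2) <= 1.
  elim => [|n IH]; first by rewrite expr0 mul1r mul0r addr0.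
  rewrite exprS -mulrA.
  have q0 : 0 <= (2/3 : R) ^+ n by apply: exprn_ge0; lra.
  have -> : (n.+1%:R : R) = n%:R + 1 by rewrite -natr1.
  have b0 : (0 : R) <= n%:R by [].
  move: IH q0 b0; set a := (2/3 : R) ^+ n; set b := (n%:R : R) => IH q0 b0.
  nra.
pose N := Num.Def.archi_bound (2 / e).
have hN : 2 / e < N%:R by apply: archi_boundP; rewrite divr_ge0 // ltW.
exists N.
have := bern N.
have q0 : 0 <= (2/3 : R) ^+ N by apply: exprn_ge0; lra.
have : 1 < e * (1 + N%:R / 2).
  move: hN; rewrite ltr_pdivrMr // => hN. lra.
nra.
Qed.

Section Tietze.
Context (R : realType) (T : topologicalType) (nT : normal_space T) (F : set T)
  (f : T -> R) (M : R) (M0 : 0 < M) (fM : forall x, F x -> `|f x| <= M)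
  (Hcl : forall s : T -> R, continuous s -> forall c : R,
     closed (F `&` [set x | f x - s x <= c]) /\ closed (F `&` [set x | c <= f x - s x])).

Let r (n : nat) : R := M * (2/3) ^+ n.

Let r_ge0 n : 0 <= r n.
Proof. by rewrite /r mulr_ge0 ?ltW // exprn_ge0 //; lra. Qed.

Let rS n : r n.+1 = 2 * (r n / 3).
Proof. by rewrite /r exprS; field. Qed.

Let Pst (n : nat) (s : T -> R) (u : T -> R) : Prop :=
  continuous u /\ (forall x, `|u x| <= r n / 3) /\
  (forall x, F x -> `|(f x - s x) - u x| <= 2 * (r n / 3)).

Fixpoint S (n : nat) : T -> R :=
  match n with
  | 0 => fun _ => 0
  | n'.+1 => fun x => S n' x + pickf (Pst n' (S n')) x
  end.

Let inv n : continuous (S n) /\ forall x, F x -> `|f x - S n x| <= r n.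
Proof.
elim: n => [|n [cS bS]].
  by split; [move=> x; exact: cvg_cst| move=> x Fx; rewrite /= subr0 /r expr0 mulr1; exact: fM].
have ex : exists u, Pst n (S n) u.
  have r3 : 0 < r n / 3 by rewrite divr_gt0 // /r mulr_gt0 // exprn_gt0 //; lra.
  have b3 : forall x, F x -> `|f x - S n x| <= 3 * (r n / 3).
    by move=> x Fx; rewrite mulrC divfK; [exact: bS|lra].
  have [u [cu [ub hb]]] := @tstep R T nT F (fun x => f x - S n x) (r n / 3) r3
     b3 (proj1 (Hcl _ cS _)) (proj2 (Hcl _ cS _)).
  by exists u.
have [cu [ub hb]] := pickfP ex.
split.
  by move=> x /=; apply: cvgD; [exact: cS|exact: cu].
move=> x Fx /=; rewrite rS opprD addrA; exact: hb.
Qed.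

Let incr n x : `|S n.+1 x - S n x| <= r n / 3.
Proof.
have [cS bS] := inv n.
have ex : exists u, Pst n (S n) u.
  have r3 : 0 < r n / 3 by rewrite divr_gt0 // /r mulr_gt0 // exprn_gt0 //; lra.
  have b3 : forall x, F x -> `|f x - S n x| <= 3 * (r n / 3).
    by move=> y Fy; rewrite mulrC divfK; [exact: bS|lra].
  have [u [cu [ub hb]]] := @tstep R T nT F (fun x => f x - S n x) (r n / 3) r3
     b3 (proj1 (Hcl _ cS _)) (proj2 (Hcl _ cS _)).
  by exists u.
have [cu [ub hb]] := pickfP ex.
by rewrite /= addrC addKr.
Qed.

Let cauchy n k x : `|S (n + k) x - S n x| <= r n - r (n + k).
Proof.
elim: k => [|k IH]; first by rewrite addn0 subrr normr0 subrr.
rewrite addnS.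
have := incr (n + k) x.
have := rS (n + k).
move: IH; set a := S (n + k).+1 x; set b := S (n + k) x; set c := S n x.
move=> IH e1 h.
have := ler_normD (a - b) (b - c).
rewrite addrA subrK.
lra.
Qed.

Let close a b x : `|S a x - S b x| <= r (minn a b).
Proof.
wlog ab : a b / (b <= a)%N.
  move=> W; case/orP: (leq_total b a) => h; first exact: W.
  by rewrite distrC minnC; exact: (W b a h).
rewrite (minn_idPr ab) -(subnKC ab).
have := cauchy b (a - b) x; have := r_ge0 (b + (a - b)); lra.
Qed.

Definition gT (x : T) : R := sup (range (fun n => S n x - r n)).

Let gT_near n x : `|gT x - S n x| <= r n.
Proof.
have ub : forall k, S k x - r k <= S n x + r n.
  move=> k; have := close k n x; rewrite ler_norml => /andP[h1 h2].
  have [kn|kn] := leqP k n.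
    rewrite (minn_idPl kn) in h1 h2; have := r_ge0 n; lra.
  rewrite (minn_idPr (ltnW kn)) in h1 h2; have := r_ge0 k; lra.
have hs : has_ubound (range (fun n => S n x - r n)).
  by exists (S n x + r n) => _ [k _ <-]; exact: ub.
rewrite ler_norml; apply/andP; split.
  have : S n x - r n <= gT x by apply: ub_le_sup => //; exists n.
  lra.
have : gT x <= S n x + r n.
  apply: ge_sup; first by exists (S 0 x - r 0), 0%N.
  by move=> _ [k _ <-]; exact: ub.
lra.
Qed.

Lemma r_small e : 0 < e -> exists n, r n < e.
Proof.
move=> e0; have [n hn] := @geo_small R _ (divr_gt0 e0 M0).
by exists n; rewrite /r mulrC -ltr_pdivlMr.
Qed.

Lemma gT_cont : continuous gT.
Proof.
move=> x; apply/cvgrPdist_lt => e e0.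
have [n hn] := r_small _ (divr_gt0 e0 (ltr0n _ 3)).
have [cS _] := inv n.
have := cS x; move/cvgrPdist_lt => /(_ (e / 3) (divr_gt0 e0 (ltr0n _ 3))).
apply: filterS => t ht.
have h1 := gT_near n x; have h2 := gT_near n t.
have := ler_normD (gT x - S n x) (S n x - gT t).
have := ler_normD (S n x - S n t) (S n t - gT t).
rewrite !addrA !subrK distrC [`|S n t - gT t|]distrC.
lra.
Qed.

Lemma gT_ext x : F x -> gT x = f x.
Proof.
move=> Fx; apply/eqP; rewrite -subr_eq0 -normr_eq0; apply/negPn/negP => ne.
have d0 : 0 < `|gT x - f x| / 2.
  by rewrite divr_gt0 // lt0r ne normr_ge0.
have [n hn] := r_small _ d0.
have h1 := gT_near n x; have [_ h2] := inv n.
have := h2 x Fx.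
have := ler_normD (gT x - S n x) (S n x - f x).
rewrite addrA subrK [`|S n x - f x|]distrC.
lra.
Qed.

End Tietze.

Lemma tietze (R : realType) (T : topologicalType) (nT : normal_space T) (F : set T)
  (f : T -> R) (M : R) : 0 < M -> (forall x, F x -> `|f x| <= M) ->
  (forall s : T -> R, continuous s -> forall c : R,
     closed (F `&` [set x | f x - s x <= c]) /\ closed (F `&` [set x | c <= f x - s x])) ->
  exists g : T -> R, continuous g /\ forall x, F x -> g x = f x.
Proof.
move=> M0 fM Hcl; exists (@gT R T F f M); split; first exact: gT_cont.
exact: gT_ext.
Qed.

Definition fsat {X Y : Type} (pi : X -> Y) (y : Y) (A : set X) : Prop :=
  forall x1 x2, pi x1 = pi x2 -> pi x1 <> y -> A x1 -> A x2.

Definition satZ {X Y : topologicalType} (pi : X -> Y) (y : Y) : Type := X.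

HB.instance Definition _ (X Y : topologicalType) (pi : X -> Y) (y : Y) :=
  Choice.on (satZ pi y).

Definition zopen {X Y : topologicalType} (pi : X -> Y) (y : Y) : set_system (satZ pi y) :=
  fun A => @open X A /\ fsat pi y A.

Lemma zopenT {X Y : topologicalType} (pi : X -> Y) (y : Y) : zopen pi y setT.
Proof. by split; [exact: openT|]. Qed.

Lemma zopenI {X Y : topologicalType} (pi : X -> Y) (y : Y) : setI_closed (zopen pi y).
Proof.
move=> A B [oA sA] [oB sB]; split; first exact: openI.
by move=> x1 x2 e ne [Ax Bx]; split; [exact: sA Ax|exact: sB Bx].
Qed.

Lemma zopenU {X Y : topologicalType} (pi : X -> Y) (y : Y) (I : Type) (f : I -> set (satZ pi y)) :
  (forall i, zopen pi y (f i)) -> zopen pi y (\bigcup_i f i).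
Proof.
move=> h; split.
  by apply: (@bigcup_open X) => i _; case: (h i).
by move=> x1 x2 e ne [i _ fx]; exists i => //; case: (h i) => _ s; exact: s fx.
Qed.

HB.instance Definition _ (X Y : topologicalType) (pi : X -> Y) (y : Y) :=
  isOpenTopological.Build (satZ pi y) (zopenT pi y) (@zopenI X Y pi y) (@zopenU X Y pi y).

Lemma zopenE {X Y : topologicalType} (pi : X -> Y) (y : Y) (A : set (satZ pi y)) :
  open A = zopen pi y A.
Proof. by []. Qed.

Section ZFacts.
Context (X Y : topologicalType) (hX : hausdorff_space X) (hY : hausdorff_space Y)
  (cX : compact [set: X]) (pi : X -> Y) (pi_cont : continuous pi)
  (pi_fc : fully_closed pi) (y : Y).

Local Notation Z := (satZ pi y).

Lemma id_cont : continuous (fun x : X => (x : Z)).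
Proof. by apply/continuousP => A [oA _]. Qed.

Lemma zcont_X (R : realType) (s : Z -> R) : continuous s -> continuous (s : X -> R).
Proof.
move/continuousP => cs; apply/continuousP => B oB.
by have [] := cs B oB.
Qed.

Lemma zclosed_sub (A : set X) : closed A -> A `<=` pi @^-1` [set y] ->
  closed (A : set Z).
Proof.
move=> cA sA; rewrite -openC zopenE; split.
  by rewrite (@openC X).
move=> x1 x2 e ne nA1 A2; apply: ne; rewrite e; exact: sA.
Qed.

Lemma zclosed_X (A : set Z) : closed A -> closed (A : set X) /\ fsat pi y A.
Proof.
rewrite -openC zopenE => -[oA sA]; split; first by rewrite -(@openC X).
move=> x1 x2 e ne A1; apply/not_notP => nA2.
by apply: (sA x2 x1 (esym e)) => //; rewrite -e.
Qed.

Definition sint (W : set X) : set X :=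
  [set x | W x /\ (pi x = y \/ forall x', pi x' = pi x -> W x')].

Lemma sint_open (W : set X) : open W -> zopen pi y (sint W).
Proof.
move=> oW; split; last first.
  move=> x1 x2 e ne [W1 [//|h]]; split; first by apply: h.
  by right => x' e'; apply: h; rewrite e'.
rewrite openE => x [Wx [pxy|fib]].
- have nW : nbhs x W by rewrite nbhsE; exists W.
  have [N Nx cN] := compact_regular hX cX (filterT : nbhs x setT) nW.
  set K := closure N.
  have KW : K `&` ~` W = set0.
    by apply/seteqP; split => // z [/cN Wz nWz].
  have fin := pi_fc K (~` W) (@closed_closure _ N) (open_closedC oW) KW.
  set P := (pi @` K `&` pi @` ~` W) `\` [set y].
  have cP : closed P.
    apply: (accessible_finite_set_closed.1 (hausdorff_accessible hY)).
    exact: finite_setD.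
  have cC : closed (pi @^-1` P) by apply: closed_comp => // z _; exact: pi_cont.
  have nC : nbhs x (~` (pi @^-1` P)).
    rewrite nbhsE; exists (~` (pi @^-1` P)) => //; split.
      by rewrite openC.
    by move=> [_ /=]; rewrite pxy.
  rewrite /interior; apply: filterS (filterI Nx nC) => z [Nz nCz].
  have Wz : W z by apply: cN; exact: subset_closure.
  split => //.
  have [pz|pz] := pselect (pi z = y); first by left.
  right => x' e'; apply/not_notP => nW'.
  apply: nCz; split; last by [].
  split; first by exists z => //; exact: subset_closure.
  by exists x'.
- have cD : closed (pi @` ~` W).
    apply: compact_closed hY _; apply: continuous_compact.
      exact: continuous_subspaceT.
    apply: subclosed_compact cX _ => //; exact: open_closedC.
  have nD : nbhs x (pi @^-1` ~` (pi @` ~` W)).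
    rewrite nbhsE; exists (pi @^-1` ~` (pi @` ~` W)) => //; split.
      by apply: open_comp; [move=> z _; exact: pi_cont|rewrite openC].
    by move=> /= [x' nW' e']; apply: nW'; apply: fib.
  apply: filterS nD => z /= nDz.
  have Wz : W z by apply/not_notP => nWz; apply: nDz; exists z.
  split => //; right => x' e'; apply/not_notP => nW'; apply: nDz; by exists x'.
Qed.

Lemma z_normal (R : realType) : normal_space Z.
Proof.
apply: ((@normal_openP R Z).2) => A B cA cB AB.
have [cA' sA] := zclosed_X _ cA; have [cB' sB] := zclosed_X _ cB.
have nX := compact_normal hX cX.
have [U [V [oU oV AU BV UV]]] := (@normal_openP R X).1 nX A B cA' cB' AB.
exists (sint U), (sint V); split.
- by rewrite zopenE; exact: sint_open.
- by rewrite zopenE; exact: sint_open.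
- move=> x Ax; split; first exact: AU.
  have [px|px] := pselect (pi x = y); [by left|right] => x' e'.
  by apply: AU; apply: (sA x x') => //; rewrite e'.
- move=> x Bx; split; first exact: BV.
  have [px|px] := pselect (pi x = y); [by left|right] => x' e'.
  by apply: BV; apply: (sB x x') => //; rewrite e'.
- apply/seteqP; split => // z [[Uz _] [Vz _]].
  by have : (U `&` V) z by []; rewrite UV.
Qed.

Lemma zconst (R : realType) (g : Z -> R) : continuous g ->
  forall x1 x2 : X, pi x1 = pi x2 -> pi x1 <> y -> g x1 = g x2.
Proof.
move=> cg x1 x2 e ne; apply/eqP; rewrite -subr_eq0 -normr_eq0; apply/negPn/negP => nz.
have d0 : 0 < `|g x1 - g x2| by rewrite lt0r nz normr_ge0.
have := cg (x2 : Z); move/cvgrPdist_lt => /(_ _ d0).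
rewrite nbhsE => -[B [oB Bx2] BP].
have B1 : B x1.
  by move: oB; rewrite zopenE => -[_ s]; apply: (s x2 x1) => //; rewrite -e.
by have := BP x1 B1; rewrite /= distrC ltxx.
Qed.

End ZFacts.

Theorem lemma4p2 (R : realType) (X Y : topologicalType)
  (hX : hausdorff_space X) (hY : hausdorff_space Y)
  (cX : compact [set: X]) (cY : compact [set: Y])
  (pi : X -> Y) (pi_cont : continuous pi) (pi_surj : set_surj [set: X] [set: Y] pi)
  (pi_fc : fully_closed pi)
  (y : Y) (f : X -> R) (f_cont : {within pi @^-1` [set y], continuous f}) :
  exists g : X -> R,
    continuous g /\
    (forall x, pi x = y -> g x = f x) /\
    (forall y' : Y, y' <> y ->
       forall x1 x2 : X, pi x1 = y' -> pi x2 = y' -> g x1 = g x2).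
Proof.
set F := pi @^-1` [set y].
have cF : closed F.
  apply: closed_comp; first by move=> z _; exact: pi_cont.
  exact: (accessible_closed_set1 (hausdorff_accessible hY)).
have kF : compact F by apply: subclosed_compact cF cX _.
have cb := compact_bounded (continuous_compact f_cont kF).
case: cb => M0 [_ HM].
have M0M : M0 < `|M0| + 1 by rewrite (le_lt_trans (ler_norm M0)) // ltrDl.
have Mpos : 0 < `|M0| + 1 by rewrite ltr_wpDl.
have fM : forall x, F x -> `|f x| <= `|M0| + 1.
  by move=> x Fx; apply: (HM _ M0M); exists x.
have Hcl : forall s : satZ pi y -> R, continuous s -> forall c : R,
    closed ((F : set (satZ pi y)) `&` [set x | f x - s x <= c]) /\
    closed ((F : set (satZ pi y)) `&` [set x | c <= f x - s x]).
  move=> s cs c.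
  have csX : continuous (s : X -> R) by exact: zcont_X.
  have hc : {within F, continuous (fun x => f x - (s : X -> R) x)}.
    have := within_continuousB f_cont (continuous_subspaceT (A:=F) csX).
    by [].
  have clos : forall C : set R, closed C ->
      closed ((F `&` ((fun x => f x - (s : X -> R) x) @^-1` C)) : set (satZ pi y)).
    move=> C cC; apply: zclosed_sub; last by move=> z [].
    rewrite setIC closed_setIS //.
    by apply: closed_comp => // z _; exact: hc.
  by split; [exact: (clos _ (@closed_le R c))|exact: (clos _ (@closed_ge R c))].
have nZ : normal_space (satZ pi y).
  by apply: (@z_normal X Y hX hY cX pi pi_cont pi_fc y R).
have [g [cg gf]] := @tietze R (satZ pi y) nZ F f _ Mpos fM Hcl.
exists g; split; first exact: zcont_X.
split; first by move=> x px; exact: gf.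
move=> y' ne x1 x2 e1 e2; apply: (@zconst X Y pi y R g cg); first by rewrite e1 e2.
by rewrite e1.
Qed.
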